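(* Every special generalized crown has, as a retract, a special generalized crown that has no irreducible elements.
   Context: All posets are finite. A subset $Q\subseteq P$ (with induced order) is a retract of $P$ if there is an order-preserving map $f:P\to Q$ with $f(q)=q$ for all $q\in Q$. For $p,q\in P$, $p$ is a lower cover of $q$ (and $q$ an upper cover of $p$) if $p<q$ and there is no $r$ with $p<r<q$. An element is irreducible if it has exactly one upper cover or exactly one lower cover. Let $A=(a_0,\dots,a_{m-1})$ and $B=(b_0,\dots,b_{n-1})$ be disjoint antichains in a poset, each equipped with a cyclic ordering given by the indexing, with $m,n\ge 2$. The subposet $A\cup B$ is circulant with bipartition $\{A,B\}$ if every strict comparability in $A\cup B$ is between an element of $A$ and an element of $B$, and the map sending $a_i\mapsto a_{i+1 \bmod m}$ and $b_j\mapsto b_{j+1\bmod n}$ is order-preserving on $A\cup B$. A poset $P$ is a generalized crown with $k$-partition $\{A_0,\dots,A_{k-1}\}$ if $P$ is partitioned into cyclically ordered antichains $A_0,\dots,A_{k-1}$, each with at least two elements, such that for all $0\le i<j\le k-1$ the subposet $A_i\cup A_j$ is circulant with bipartition $\{A_i,A_j\}$. Such a generalized crown is special if it admits an automorphism whose orbits are exactly the sets $A_0,\dots,A_{k-1}$. *)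

(* Defs.v *)
From HB Require Import structures.
From mathcomp Require Import all_boot all_order.
Set Implicit Arguments. Unset Strict Implicit. Unset Printing Implicit Defensive.
Import Order.Theory.
Local Open Scope order_scope.

(* Finite posets: a finite poset is a finPOrderType T; subposets are sets
   S : {set T} with the induced order. *)
Section Crowns.
Context {d : Order.disp_t} {T : finPOrderType d}.

Definition retract (S Q : {set T}) : Prop :=
  Q \subset S /\
  exists f : T -> T,
    [/\ forall x, x \in S -> f x \in Q,
        forall x y, x \in S -> y \in S -> x <= y -> f x <= f y
      & forall q, q \in Q -> f q = q].

Definition lower_cover (S : {set T}) (p q : T) : bool :=
  [&& p \in S, q \in S, p < q & [forall r, ~~ [&& r \in S, p < r & r < q]]].

Definition upper_covers (S : {set T}) (x : T) : {set T} :=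
  [set y in S | lower_cover S x y].
Definition lower_covers (S : {set T}) (x : T) : {set T} :=
  [set y in S | lower_cover S y x].

Definition irreducible (S : {set T}) (x : T) : bool :=
  (#|upper_covers S x| == 1%N) || (#|lower_covers S x| == 1%N).

(* a sequence (with its cyclic ordering by index) is a cyclically ordered
   antichain with at least two elements *)
Definition cyc_antichain (A : seq T) : Prop :=
  [/\ uniq A, (2 <= size A)%N &
      forall x y, x \in A -> y \in A -> x <= y -> x = y].

(* A u B circulant with bipartition {A, B}; the shift map a_i |-> a_{i+1 mod m}
   is [next A] (path.v), likewise for B. *)
Definition circulant (A B : seq T) : Prop :=
  (forall x y, x \in A ++ B -> y \in A ++ B -> x < y ->
     (x \in A) && (y \in B) || (x \in B) && (y \in A)) /\
  (let sh x := if x \in A then next A x else next B x in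
   forall x y, x \in A ++ B -> y \in A ++ B -> x <= y -> sh x <= sh y).

Definition gen_crown (S : {set T}) (k : nat) (A : 'I_k -> seq T) : Prop :=
  [/\ forall i, cyc_antichain (A i),
      forall i j x, i != j -> x \in A i -> x \notin A j,
      forall x, x \in S <-> exists i, x \in A i
    & forall i j : 'I_k, (i < j)%N -> circulant (A i) (A j)].

Definition automorphism (S : {set T}) (g : T -> T) : Prop :=
  [/\ forall x, x \in S -> g x \in S,
      {in S &, injective g}
    & forall x y, x \in S -> y \in S -> (x <= y) = (g x <= g y)].

Definition special_gen_crown (S : {set T}) : Prop :=
  exists k (A : 'I_k -> seq T), gen_crown S A /\
    exists g : T -> T, automorphism S g /\
      forall i x, x \in A i -> forall y, fconnect g x y = (y \in A i).

End Crowns.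

(* Main.v *)
Require Import Defs.
From HB Require Import structures.
From mathcomp Require Import all_boot all_order.
Set Implicit Arguments. Unset Strict Implicit. Unset Printing Implicit Defensive.
Import Order.Theory.
Local Open Scope order_scope.

Section Aux.
Context {d : Order.disp_t} {T : finPOrderType d}.
Implicit Types (S P : {set T}) (x y : T).

Lemma retract_refl S : retract S S.
Proof. split => //; exists id; split => //. Qed.

Lemma retract_trans S Q1 Q2 : retract S Q1 -> retract Q1 Q2 -> retract S Q2.
Proof.
move=> [s1 [f1 [a1 b1 c1]]] [s2 [f2 [a2 b2 c2]]].
split; first exact: subset_trans s2 s1.
exists (f2 \o f1); split => /=.
- by move=> x xS; apply: a2; apply: a1.
- by move=> x y xS yS le; apply: b2; [apply: a1|apply: a1|apply: b1].
- move=> q qQ; rewrite c1 ?c2 //; exact: (subsetP s2).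
Qed.

Lemma exists_ucov S x n : forall y, leq #|[set r in S | (x < r) && (r < y)]| n ->
  x \in S -> y \in S -> x < y -> exists2 c, lower_cover S x c & c <= y.
Proof.
elim: n => [|n IH] y Hn xS yS xy.
  exists y => //; rewrite /lower_cover xS yS xy /=; apply/forallP => r.
  apply/negP => /and3P [rS xr ry].
  move: Hn; rewrite leqn0 => /eqP/card0_eq/(_ r); rewrite inE rS xr ry //.
case: (boolP [forall r, ~~ [&& r \in S, x < r & r < y]]) => H.
  by exists y => //; rewrite /lower_cover xS yS xy H.
move/forallPn: H => [r]; rewrite negbK => /and3P [rS xr ry].
have [|c Hc cr] := IH r _ xS rS xr; last by exists c => //; apply: le_trans cr (ltW ry).
rewrite -ltnS; apply: leq_trans Hn; apply: proper_card; apply/properP; split.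
  apply/subsetP => z; rewrite !inE => /and3P [-> -> zr] /=; exact: lt_trans zr ry.
by exists r; rewrite !inE ?rS ?xr ?ry ?ltxx ?andbF.
Qed.

Lemma exists_lcov S x n : forall y, leq #|[set r in S | (y < r) && (r < x)]| n ->
  x \in S -> y \in S -> y < x -> exists2 c, lower_cover S c x & y <= c.
Proof.
elim: n => [|n IH] y Hn xS yS xy.
  exists y => //; rewrite /lower_cover xS yS xy /=; apply/forallP => r.
  apply/negP => /and3P [rS xr ry].
  move: Hn; rewrite leqn0 => /eqP/card0_eq/(_ r); rewrite inE rS xr ry //.
case: (boolP [forall r, ~~ [&& r \in S, y < r & r < x]]) => H.
  by exists y => //; rewrite /lower_cover xS yS xy H.
move/forallPn: H => [r]; rewrite negbK => /and3P [rS yr rx].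
have [|c Hc cr] := IH r _ xS rS rx; last by exists c => //; apply: le_trans (ltW yr) cr.
rewrite -ltnS; apply: leq_trans Hn; apply: proper_card; apply/properP; split.
  apply/subsetP => z; rewrite !inE => /and3P [-> rz ->]; rewrite andbT; exact: lt_trans yr rz.
by exists r; rewrite !inE ?rS ?yr ?rx ?ltxx.
Qed.

Lemma aut_surj S g : automorphism S g -> forall r, r \in S -> exists2 r0, r0 \in S & r = g r0.
Proof.
move=> [gS ginj _] r rS.
have e : g @: S = S.
  apply/eqP; rewrite eqEcard card_in_imset // leqnn andbT.
  by apply/subsetP => z /imsetP [w wS ->]; apply: gS.
by move: rS; rewrite -{1}e => /imsetP [r0 r0S ->]; exists r0.
Qed.

Lemma aut_lt S g x y : automorphism S g -> x \in S -> y \in S -> (x < y) = (g x < g y).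
Proof.
move=> [gS ginj gle] xS yS; rewrite !lt_neqAle -gle //; congr (_ && _).
apply/idP/idP; apply: contra => /eqP e; apply/eqP; last by rewrite e.
exact: ginj.
Qed.

Lemma aut_cover S g p q : automorphism S g -> lower_cover S p q -> lower_cover S (g p) (g q).
Proof.
move=> A /and4P [pS qS pq /forallP H]; have [gS _ _] := A.
rewrite /lower_cover !gS // -(aut_lt A pS qS) pq /=; apply/forallP => r.
apply/negP => /and3P [rS pr rq].
have [r0 r0S er] := aut_surj A rS; subst r.
by move: (H r0); rewrite r0S (aut_lt A pS r0S) (aut_lt A r0S qS) pr rq.
Qed.

Lemma aut_card S g x : automorphism S g -> x \in S ->
  (#|upper_covers S x| <= #|upper_covers S (g x)|)%N /\
  (#|lower_covers S x| <= #|lower_covers S (g x)|)%N.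
Proof.
move=> A xS; have [gS ginj _] := A; split.
  rewrite -(card_in_imset (f := g) (D := upper_covers S x)); last first.
    by move=> a b; rewrite !inE => /andP [aS _] /andP [bS _]; apply: ginj.
  apply: subset_leq_card; apply/subsetP => z /imsetP [w]; rewrite !inE => /andP [wS wc] ->.
  by rewrite gS // aut_cover.
rewrite -(card_in_imset (f := g) (D := lower_covers S x)); last first.
  by move=> a b; rewrite !inE => /andP [aS _] /andP [bS _]; apply: ginj.
apply: subset_leq_card; apply/subsetP => z /imsetP [w]; rewrite !inE => /andP [wS wc] ->.
by rewrite gS // aut_cover.
Qed.

Lemma aut_card_iter S g x m : automorphism S g -> x \in S ->
  (#|upper_covers S x| <= #|upper_covers S (iter m g x)|)%N /\
  (#|lower_covers S x| <= #|lower_covers S (iter m g x)|)%N.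
Proof.
move=> A xS; have [gS _ _] := A.
elim: m => [|m [IH1 IH2]] /=; first by [].
have mS : iter m g x \in S by elim: m {IH1 IH2} => //= m IH; apply: gS.
have [h1 h2] := aut_card A mS; split; [exact: leq_trans h1|exact: leq_trans h2].
Qed.


Lemma lift_ltn n (h : 'I_n) (a b : 'I_n.-1) : (a < b)%N -> (lift h a < lift h b)%N.
Proof. by move=> ab; rewrite /= ltnNge leq_bump2 -ltnNge. Qed.

Lemma block_retract S P (h : T -> T) :
  P \subset S ->
  (forall y, y \in P -> h y \in S /\ h y \notin P) ->
  (forall x y, x \in S -> y \in S -> x <= y ->
     (if x \in P then h x else x) <= (if y \in P then h y else y)) ->
  retract S (S :\: P).
Proof.
move=> PS Hh Hle; split; first exact: subsetDl.
exists (fun y => if y \in P then h y else y); split.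
- move=> y yS; case: ifP => yP; rewrite inE.
    by have [-> ->] := Hh y yP.
  by rewrite yP yS.
- exact: Hle.
- by move=> q; rewrite inE => /andP [/negPf -> _].
Qed.

Lemma step S x : special_gen_crown S -> x \in S -> irreducible S x ->
  exists S' : {set T}, [/\ retract S S', special_gen_crown S' & (#|S'| < #|S|)%N].
Proof.
move=> [k [A [[Hac Hdis HS Hcirc] [g [Haut Horb]]]]] xS Hirr.
have [i xAi] := (HS x).1 xS.
pose P := [set z | z \in A i].
have PS : P \subset S by apply/subsetP => z; rewrite inE => zA; apply/(HS z).2; exists i.
have anti : forall y z, y \in A i -> z \in A i -> y <= z -> y = z by have [_ _ h] := Hac i.
have cnt : forall y, y \in A i -> #|upper_covers S y| = #|upper_covers S x| /\
                                  #|lower_covers S y| = #|lower_covers S x|.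
  move=> y yA.
  have yS : y \in S by apply/(HS y).2; exists i.
  have fxy : fconnect g x y by rewrite (Horb i x xAi).
  have fyx : fconnect g y x by rewrite (Horb i y yA).
  have [a1 a2] := aut_card_iter (findex g x y) Haut xS; rewrite iter_findex // in a1 a2.
  have [b1 b2] := aut_card_iter (findex g y x) Haut yS; rewrite iter_findex // in b1 b2.
  by split; apply/eqP; rewrite eqn_leq ?a1 ?b1 ?a2 ?b2.
exists (S :\: P); split; last first.
- apply: proper_card; apply/properP; split; first exact: subsetDl.
  by exists x => //; rewrite !inE xAi.
- exists k.-1, (fun j => A (lift i j)); split.
  + split.
    * by move=> j; apply: Hac.
    * by move=> j1 j2 z ne; apply: Hdis; rewrite (inj_eq (@lift_inj _ i)).
    * move=> z; split.
        rewrite !inE => /andP [zP zS]; have [j zA] := (HS z).1 zS.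
        case: (unliftP i j) => [j' ej|ej]; first by exists j'; rewrite ej in zA.
        by move: zP; rewrite -ej zA.
      move=> [j zA]; rewrite !inE; apply/andP; split; last by apply/(HS z).2; exists (lift i j).
      by apply: (Hdis (lift i j)) => //; rewrite eq_sym neq_lift.
    * by move=> j1 j2 lt; apply: Hcirc; apply: lift_ltn.
  + exists g; split.
    * have [gS ginj gle] := Haut; split.
      - move=> z; rewrite !inE => /andP [zP zS]; rewrite gS // andbT.
        have [j zA] := (HS z).1 zS.
        have gA : g z \in A j by rewrite -(Horb j z zA) fconnect1.
        apply: contra zP => gAi; case: (eqVneq j i) => [ej|ne]; first by rewrite -ej.
        by move: (Hdis j i (g z) ne gA); rewrite gAi.
      - by move=> a b; rewrite !inE => /andP [_ aS] /andP [_ bS]; apply: ginj.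
      - by move=> a b; rewrite !inE => /andP [_ aS] /andP [_ bS]; apply: gle.
    * by move=> j z zA y; apply: Horb.
case/orP: Hirr => Hirr.
- pose h y := odflt y [pick z in upper_covers S y].
  have Hh : forall y, y \in A i -> lower_cover S y (h y) /\
                                  forall c, lower_cover S y c -> c = h y.
    move=> y yA; have /cards1P [c Hc] : #|upper_covers S y| == 1%N by rewrite (cnt y yA).1.
    have hc : h y = c.
      rewrite /h; case: pickP => [z|H]; first by rewrite Hc in_set1 => /eqP.
      by move: (H c); rewrite Hc set11.
    have : c \in upper_covers S y by rewrite Hc set11.
    rewrite hc inE => /andP [_ cc]; split => // c' cc'.
    have : c' \in upper_covers S y.
      by rewrite inE cc'; case/and4P: cc' => _ -> _ _.
    by rewrite Hc in_set1 => /eqP.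
  apply: (block_retract (h := h) PS).
  + move=> y; rewrite inE => yA; have [/and4P [_ hS yh _] _] := Hh y yA; split => //.
    rewrite inE; apply/negP => hA; have e := anti _ _ yA hA (ltW yh).
    by rewrite -e ltxx in yh.
  + move=> a b aS bS ab; rewrite !inE.
    case: (boolP (a \in A i)) => aA; case: (boolP (b \in A i)) => bA //.
    * by rewrite (anti a b aA bA ab) lexx.
    * have ab' : a < b by rewrite lt_neqAle ab andbT; apply: contraNneq bA => <-.
      have [c cc cb] := exists_ucov (leqnn _) aS bS ab'.
      by have [_ un] := Hh a aA; rewrite -(un c cc).
    * by have [/and4P [_ _ bh _] _] := Hh b bA; apply: le_trans ab (ltW bh).
- pose h y := odflt y [pick z in lower_covers S y].
  have Hh : forall y, y \in A i -> lower_cover S (h y) y /\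
                                  forall c, lower_cover S c y -> c = h y.
    move=> y yA; have /cards1P [c Hc] : #|lower_covers S y| == 1%N by rewrite (cnt y yA).2.
    have hc : h y = c.
      rewrite /h; case: pickP => [z|H]; first by rewrite Hc in_set1 => /eqP.
      by move: (H c); rewrite Hc set11.
    have : c \in lower_covers S y by rewrite Hc set11.
    rewrite hc inE => /andP [_ cc]; split => // c' cc'.
    have : c' \in lower_covers S y.
      by rewrite inE cc'; case/and4P: cc' => -> _ _ _.
    by rewrite Hc in_set1 => /eqP.
  apply: (block_retract (h := h) PS).
  + move=> y; rewrite inE => yA; have [/and4P [hS _ yh _] _] := Hh y yA; split => //.
    rewrite inE; apply/negP => hA; have e := anti _ _ hA yA (ltW yh).
    by rewrite e ltxx in yh.
  + move=> a b aS bS ab; rewrite !inE.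
    case: (boolP (a \in A i)) => aA; case: (boolP (b \in A i)) => bA //.
    * by rewrite (anti a b aA bA ab) lexx.
    * by have [/and4P [_ _ ha _] _] := Hh a aA; apply: le_trans (ltW ha) ab.
    * have ab' : a < b by rewrite lt_neqAle ab andbT; apply: contraNneq aA => ->.
      have [c cc cb] := exists_lcov (leqnn _) bS aS ab'.
      by have [_ un] := Hh b bA; rewrite -(un c cc).
Qed.

Lemma main_ind n : forall S : {set T}, (#|S| <= n)%N -> special_gen_crown S ->
  exists Q : {set T},
    [/\ retract S Q, special_gen_crown Q & forall x, x \in Q -> ~~ irreducible Q x].
Proof.
elim: n => [|n IH] S Hn Hsp.
  exists S; split => //; first exact: retract_refl.
  by move=> x xS; move: Hn; rewrite leqn0 => /eqP/card0_eq/(_ x); rewrite xS.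
case: (boolP [exists x in S, irreducible S x]) => Hex; last first.
  exists S; split => //; first exact: retract_refl.
  by move=> x xS; apply: contra Hex => ir; apply/existsP; exists x; rewrite xS.
case/existsP: Hex => x /andP [xS ir].
have [S' [r1 sp' lt']] := step Hsp xS ir.
have Hn' : (#|S'| <= n)%N by rewrite -ltnS; apply: leq_trans lt' Hn.
have [Q [r2 spQ nirr]] := IH S' Hn' sp'.
by exists Q; split => //; apply: retract_trans r1 r2.
Qed.
End Aux.

Theorem lemma3p4 (d : Order.disp_t) (T : finPOrderType d) :
  special_gen_crown [set: T] ->
  exists Q : {set T},
    [/\ retract [set: T] Q, special_gen_crown Q &
        forall x, x \in Q -> ~~ irreducible Q x].
Proof. by move=> H; apply: (main_ind (leqnn _) H). Qed.
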